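(* There is an absolute constant $C>0$ such that the following holds. Let $B$ be a set of $n\ge 2$ natural numbers and let $B.B=\{bb' : b,b'\in B\}$. If $B.B$ contains an arithmetic progression $\{a, a+d, \ldots, a+(N-1)d\}$ with nonzero common difference $d$ and $N$ terms, then $N\le C\, n\log n$. *)

(* Defs.v *)
From Stdlib Require Import Reals ZArith List.
Open Scope R_scope.

Definition in_prodset (B : list nat) (x : Z) : Prop :=
  exists b b', In b B /\ In b' B /\ x = Z.of_nat (b * b').

(* Main.v *)
Require Import Defs.
From Stdlib Require Import Reals ZArith List.
Open Scope R_scope.

Module NT.
From mathcomp Require Import all_boot all_algebra zify.
Set Implicit Arguments. Unset Strict Implicit. Unset Printing Implicit Defensive.
Import GRing.Theory Num.Theory.
Local Open Scope ring_scope.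


Lemma sum_delta (T : pzRingType) s (a : 'I_s -> T) (k : 'I_s) :
  \sum_l a l * (l == k)%:R = a k.
Proof.
rewrite (bigD1 k) //= eqxx mulr1 big1 ?addr0 // => l /negbTE ->; by rewrite mulr0.
Qed.

Lemma rank_bound (n s m : nat) (F : 'M[rat]_(m, n)) (E : 'M[rat]_(n, s))
   (kap : 'I_m -> 'I_s) (l0 : 'I_s) :
  (forall i j, i != j -> (F *m E) j (kap i) = (F *m E) j l0) ->
  (forall j, (F *m E) j (kap j) != (F *m E) j l0) -> (m <= n)%N.
Proof.
move=> Hoff Hdiag.
set W := F *m E.
pose D : 'M[rat]_(s, m) := \matrix_(l, i) ((l == kap i)%:R - (l == l0)%:R).
have HWD : W *m D = diag_mx (\row_j (W j (kap j) - W j l0)).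
  apply/matrixP => j i.
  rewrite [LHS]mxE [RHS]mxE.
  have -> : (\row_j0 (W j0 (kap j0) - W j0 l0)) 0 j = W j (kap j) - W j l0 by rewrite mxE.
  under eq_bigr => l _ do rewrite /D [X in _ * X]mxE mulrBr.
  rewrite sumrB !sum_delta.
  case: (eqVneq i j) => [->|ne]; first by rewrite mulr1n.
  by rewrite mulr0n Hoff ?subrr.
have Hu : W *m D \in unitmx.
  rewrite HWD unitmxE det_diag unitfE; apply/prodf_neq0 => j _.
  by rewrite mxE subr_eq0.
have := mxrank_unit Hu.
move=> Hr.
have h1 := mxrankM_maxl W D.
have h2 := mxrankM_maxl F E.
have h3 := rank_leq_col F.
rewrite Hr in h1.
exact: leq_trans h1 (leq_trans h2 h3).
Qed.


Lemma priv_bound (B : seq nat) (M : nat) (g : nat) (y : 'I_M -> nat)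
   (P : pred 'I_M) (q : 'I_M -> nat) :
  (0 < g)%N -> (forall l, 0 < y l)%N ->
  (forall l, exists ij : 'I_(size B) * 'I_(size B),
      g * y l == nth 0 B ij.1 * nth 0 B ij.2)%N ->
  (forall b, b \in B -> 0 < b)%N ->
  (forall l, P l -> prime (q l) /\ (q l %| y l)%N /\
       forall l', l' != l -> ~~ (q l %| y l')%N) ->
  (#|P| <= (size B).+1)%N.
Proof.
move=> g0 y0 HB Bpos HP.
case: M y P q HB HP y0 => [|M] y P q HB HP y0.
  by apply: leq_trans (max_card _) _; rewrite card_ord.
pose l0 : 'I_M.+1 := ord0.
pose K := [set l | P l & l != l0].
have hK : (#|P| <= #|K|.+1)%N.
  rewrite (cardD1 l0 P) -[#|K|.+1]add1n; apply: leq_add; first exact: leq_b1.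
  apply: subset_leq_card; apply/subsetP => l.
  by rewrite !inE andbC.
apply: (leq_trans hK); rewrite ltnS.
set n := size B.
pose m := #|K|.
pose kap : 'I_m -> 'I_M.+1 := enum_val (A := K).
have kapK : forall j, P (kap j) /\ kap j != l0.
  by move=> j; have := enum_valP j; rewrite inE => /andP.
pose IJ l := xchoose (HB l).
have IJs l : (g * y l = nth 0 B (IJ l).1 * nth 0 B (IJ l).2)%N.
  by apply/eqP; exact: (xchooseP (HB l)).
pose F : 'M[rat]_(m, n) := \matrix_(j, i) (logn (q (kap j)) (nth 0 B i))%:R.
pose E : 'M[rat]_(n, M.+1) := \matrix_(i, l) ((i == (IJ l).1)%:R + (i == (IJ l).2)%:R).
have Bp : forall i : 'I_n, (0 < nth 0 B i)%N.
  by move=> i; apply: Bpos; apply: mem_nth.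
have FE : forall j l, (F *m E) j l = (logn (q (kap j)) (g * y l))%:R.
  move=> j l; rewrite mxE.
  under eq_bigr => i _ do rewrite [X in _ * X]mxE mulrDr.
  rewrite big_split /= !sum_delta !mxE -natrD -lognM //.
  by rewrite IJs.
have Hval : forall j l, logn (q (kap j)) (g * y l) =
     (logn (q (kap j)) g + logn (q (kap j)) (y l))%N.
  by move=> j l; rewrite lognM.
apply: (@rank_bound n M.+1 m F E kap l0).
- move=> i j ne; rewrite !FE !Hval.
  have [_ [_ Hn]] := HP _ (proj1 (kapK j)).
  have kne : kap i != kap j.
    by apply: contra ne => /eqP /enum_val_inj ->.
  have l0ne : l0 != kap j by rewrite eq_sym; exact: (proj2 (kapK j)).
  rewrite (@lognE _ (y (kap i))) (@lognE _ (y l0)).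
  by rewrite (negbTE (Hn _ kne)) (negbTE (Hn _ l0ne)) !andbF.
- move=> j; rewrite !FE !Hval.
  have [pq [dq Hn]] := HP _ (proj1 (kapK j)).
  have l0ne : l0 != kap j by rewrite eq_sym; exact: (proj2 (kapK j)).
  rewrite (@lognE _ (y l0)) (negbTE (Hn _ l0ne)) !andbF /= addn0.
  rewrite eqr_nat -[X in _ != X]addn0 eqn_add2l.
  by rewrite -lt0n logn_gt0 mem_primes pq y0 dq.
Qed.

Local Open Scope nat_scope.


Lemma count_ap (Q a c d M : nat) : 0 < Q -> coprime Q d ->
  \sum_(l < M) (Q %| a + (c + l) * d) <= M %/ Q + 1.
Proof.
move=> Q0 cQd.
case: M => [|M]; first by rewrite big_ord0.
rewrite (big_mkcond xpredT) /= -big_mkcond /= sum1_card.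
set A := [pred l : 'I_M.+1 | Q %| a + (c + l) * d].
pose s := [seq (val l) %/ Q | l <- enum A].
have us : uniq s.
  rewrite map_inj_in_uniq ?enum_uniq // => l l'.
  rewrite !mem_enum !inE => hl hl' eq.
  apply: val_inj => /=.
  wlog le : l l' hl hl' eq / l <= l'.
    move=> W; case: (leqP l l') => h; first exact: W.
    by apply/esym; apply: W => //; apply: ltnW.
  have : Q %| (a + (c + l') * d) - (a + (c + l) * d) by apply: dvdn_sub.
  rewrite subnDl -mulnBl subnDl Gauss_dvdl // => dv.
  have em : l' %% Q = l %% Q.
    by apply/eqP; rewrite eqn_mod_dvd.
  by rewrite (divn_eq l Q) (divn_eq l' Q) eq em.
have sub : {subset s <= iota 0 (M %/ Q).+1}.
  move=> v /mapP [l _ ->]; rewrite mem_iota add0n /= ltnS.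
  by apply: leq_div2r; rewrite -ltnS.
have := uniq_leq_size us sub.
rewrite size_map size_iota -cardE => h.
apply: (leq_trans h); rewrite addn1 ltnS; apply: leq_div2r; exact: leqnSn.
Qed.


Lemma nb0 (b : bool) : ~~ b -> (b : nat) = 0.
Proof. by case: b. Qed.

Lemma logn_range p y Y : prime p -> 0 < y -> y <= Y ->
  logn p y = \sum_(1 <= j < Y) (p ^ j %| y).
Proof.
move=> pp y0 yY.
rewrite logn_count_dvd //.
case: (leqP y 1) => hy.
  rewrite big_geq //. rewrite big1_seq //= => j.
  rewrite mem_index_iota => /andP [j1 _].
  apply: nb0; apply/negP => /(dvdn_leq y0) h.
  have : p ^ j >= 2.
    case: j j1 h => // j' _ _; rewrite expnS.
    apply: leq_trans (prime_gt1 pp) (leq_pmulr _ _); by rewrite expn_gt0 prime_gt0.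
  move=> h2; have := leq_trans h2 h; by rewrite leqNgt ltnS hy.
rewrite [RHS](big_cat_nat _ (n:=y)) //=.
rewrite [X in _ + X]big1_seq ?addn0 // => j /andP [_].
rewrite mem_index_iota => /andP [yj _].
apply: nb0; apply/negP => /(dvdn_leq y0) h.
have : j < p ^ j by apply: ltn_expl; exact: prime_gt1.
move=> h2; have := leq_trans (leq_ltn_trans yj h2) h; by rewrite ltnn.
Qed.

Lemma sum_div_fact p M R : prime p ->
  \sum_(1 <= j < R) M %/ p ^ j <= logn p M`!.
Proof.
move=> pp; rewrite logn_fact //.
case: (leqP R M.+1) => h.
  case: (leqP R 1) => h1; first by rewrite big_geq.
  rewrite [X in _ <= X](big_cat_nat _ (n:=R)) //=; [exact: leq_addr | exact: ltnW].
rewrite (big_cat_nat _ (n:=M.+1)) //=; last exact: ltnW.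
rewrite [X in _ + X <= _]big1_seq ?addn0 // => j /andP [_]; rewrite mem_index_iota => /andP [hj _].
apply: divn_small.
apply: leq_trans hj _; apply: ltnW; apply: ltn_expl; exact: prime_gt1.
Qed.

Lemma sum_ind_min (t R : nat) : \sum_(1 <= j < R) (j <= t) = minn R.-1 t.
Proof.
elim: R => [|R IH]; first by rewrite big_geq ?min0n.
case: R IH => [|R] IH; first by rewrite big_geq ?min0n.
rewrite big_nat_recr //= IH /=.
case: (leqP R.+1 t) => h /=; rewrite !minnE; lia.
Qed.

Lemma sum_ind_tl p Y R : 1 < p ->
  \sum_(1 <= j < R) (p ^ j <= Y) <= trunc_log p Y.
Proof.
move=> p1.
apply: (@leq_trans (\sum_(1 <= j < R) (j <= trunc_log p Y))).
  apply: leq_sum => j _; case h: (p ^ j <= Y) => //.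
  by rewrite trunc_log_max.
by rewrite sum_ind_min geq_minr.
Qed.


Lemma logn_prod (I : Type) (r : seq I) (P : pred I) (F : I -> nat) p :
  (forall i, 0 < F i) ->
  logn p (\prod_(i <- r | P i) F i) = \sum_(i <- r | P i) logn p (F i).
Proof.
move=> Fp.
suff : 0 < \prod_(i <- r | P i) F i /\
   logn p (\prod_(i <- r | P i) F i) = \sum_(i <- r | P i) logn p (F i) by case.
elim/big_rec2: _ => [|i s1 s2 Pi [h1 h2]]; first by rewrite logn1.
by rewrite muln_gt0 Fp h1 lognM // h2.
Qed.

Lemma smooth_prod (M Y a c d : nat) (y : 'I_M -> nat) (S : pred 'I_M) :
  0 < Y -> coprime a d ->
  (forall l : 'I_M, y l = a + (c + l) * d) ->
  (forall l, 0 < y l <= Y) ->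
  (forall l, S l -> max_pdiv (y l) < M) ->
  \prod_(l | S l) y l <= M`! * Y ^ #|[pred q : 'I_M | prime q]|.
Proof.
move=> Y0 cad Hy Hyb HS.
have ypos : forall l, 0 < y l by move=> l; case/andP: (Hyb l).
set Pi := \prod_(l | S l) y l.
pose W := \prod_(q < M | prime q) q ^ trunc_log q Y.
have Pi0 : 0 < Pi by apply: prodn_gt0.
have W0 : 0 < W.
  by apply: prodn_gt0 => q; rewrite expn_gt0; case: (q : nat) => //.
have fact0 : 0 < M`! by apply: fact_gt0.
have Z0 : 0 < M`! * W by rewrite muln_gt0 fact0 W0.
have Hdv : Pi %| M`! * W.
  apply/dvdn_partP => // p pi.
  have pp : prime p by move: pi; rewrite mem_primes => /andP [].
  rewrite p_part pfactor_dvdn // lognM //.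
  have Hlog := @logn_prod _ (index_enum 'I_M) S y p ypos.
  rewrite /Pi Hlog.
  have pM : p < M.
    rewrite ltnNge; apply/negP => Mp.
    move: pi; rewrite -logn_gt0 /Pi Hlog big1 // => l Sl.
    apply/eqP; rewrite eqn0Ngt logn_gt0; apply/negP => hp.
    have := max_pdiv_max hp; have := HS _ Sl.
    move=> h1 h2; have := leq_ltn_trans h2 h1; rewrite ltnNge Mp //.
  have hW : trunc_log p Y <= logn p W.
    rewrite -pfactor_dvdn //.
    rewrite /W (bigD1 (Ordinal pM)) //=; exact: dvdn_mulr.
  apply: (@leq_trans (logn p M`! + trunc_log p Y)); last by rewrite leq_add2l.
  apply: (@leq_trans (\sum_l logn p (y l))).
    rewrite big_mkcond /=; apply: leq_sum => l _; by case: (S l).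
  apply: (@leq_trans (\sum_l \sum_(1 <= j < Y.+1) (p ^ j %| y l))).
    apply: leq_sum => l _; rewrite (@logn_range p (y l) Y.+1) //.
    by case/andP: (Hyb l) => _ h; apply: leqW.
  rewrite exchange_big /=.
  apply: (@leq_trans (\sum_(1 <= j < Y.+1) (M %/ p ^ j + (p ^ j <= Y)))).
    rewrite [X in X <= _]big_nat_cond [X in _ <= X]big_nat_cond.
    apply: leq_sum => j /andP [/andP [j1 _] _].
    case cpd : (coprime p d).
      case hjY : (p ^ j <= Y).
        under eq_bigr => l _ do rewrite Hy.
        apply: count_ap; first by rewrite expn_gt0 prime_gt0.
        by rewrite coprimeXl.
      rewrite big1 // => l _; apply: nb0; apply/negP => hd.
      have := dvdn_leq (ypos l) hd; case/andP: (Hyb l) => _ h1 h2.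
      by move: hjY; rewrite (leq_trans h2 h1).
    rewrite big1 // => l _.
    case: j j1 => [|j] // _.
    apply: nb0; apply/negP => hd.
    have pd : p %| d by move: cpd; rewrite prime_coprime // => /negbFE.
    have py : p %| y l by apply: dvdn_trans hd; rewrite expnS dvdn_mulr.
    move: py; rewrite Hy dvdn_addl; last by apply: dvdn_mull.
    move=> pa; move: cad; rewrite /coprime => /eqP cad.
    have : p %| gcdn a d by rewrite dvdn_gcd pa pd.
    by rewrite cad dvdn1 => /eqP p1; move: pp; rewrite p1.
  rewrite big_split /=; apply: leq_add.
    exact: sum_div_fact.
  apply: sum_ind_tl; exact: prime_gt1.
apply: (leq_trans (dvdn_leq Z0 Hdv)); rewrite leq_mul2l; apply/orP; right.
rewrite /W -prod_nat_const; apply: leq_prod => q pq.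
by apply: trunc_logP => //; apply: prime_gt1.
Qed.


Lemma bin_mid_le m : 'C(m.*2.+1, m) <= 4 ^ m.
Proof.
have h := expnDn 1 1 (m.*2.+1).
have : 'C(m.*2.+1, m) + 'C(m.*2.+1, m.+1) <= (1 + 1) ^ m.*2.+1.
  rewrite h.
  under eq_bigr => i _ do rewrite !exp1n !muln1.
  have mlt : m < m.*2.+2 by lia.
  have m1lt : m.+1 < m.*2.+2 by lia.
  rewrite (bigD1 (Ordinal mlt)) // (bigD1 (Ordinal m1lt)) /=; last first.
    by apply/eqP => [[]]; lia.
  rewrite addnA; exact: leq_addr.
have e : 'C(m.*2.+1, m.+1) = 'C(m.*2.+1, m).
  rewrite -bin_sub; last by lia.
  by congr 'C(_, _); lia.
have e2 : (1 + 1) ^ m.*2.+1 = 2 * 4 ^ m by rewrite expnS -mul2n expnM.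
rewrite e e2; set X := 4 ^ m; lia.
Qed.

Lemma primes_dvd_bin m :
  \prod_(m.+2 <= p < m.*2.+2 | prime p) p %| 'C(m.*2.+1, m).
Proof.
set Pr := \prod_(_ <= p < _ | _) p.
set Q := \prod_(m.+2 <= k < m.*2.+2) k.
have hf : (m.*2.+1)`! = (m.+1)`! * Q.
  by rewrite (@fact_split (m.*2.+1) m.+1) //; lia.
have hb : 'C(m.*2.+1, m) * (m`! * (m.*2.+1 - m)`!) = (m.*2.+1)`! by apply: bin_fact; lia.
have e : m.*2.+1 - m = m.+1 by lia.
rewrite e hf in hb; have {hb} hb : 'C(m.*2.+1, m) * m`! * (m.+1)`! = Q * (m.+1)`!.
  rewrite -mulnA hb; exact: mulnC.
have hQ : 'C(m.*2.+1, m) * m`! = Q.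
  by apply/eqP; rewrite -(eqn_pmul2r (fact_gt0 m.+1)) hb.
have PQ : Pr %| Q by rewrite /Q (bigID prime) /=; apply: dvdn_mulr.
have cop : coprime Pr m`!.
  rewrite /Pr big_nat_cond; elim/big_rec: _ => [|p x /andP [hp pp] cx]; first exact: coprime1n.
  rewrite coprimeMl cx andbT prime_coprime // fact_prod Euclid_dvd_prod //.
  rewrite big_nat_cond; elim/big_rec: _ => [|i b /andP [hi _] hb2] //=.
  apply/norP; split => //; apply/negP => /(dvdn_leq _) h.
  move: hp hi h; lia.
by rewrite -(Gauss_dvdr _ cop) mulnC hQ.
Qed.

Lemma primorial x : \prod_(0 <= p < x.+1 | prime p) p <= 4 ^ x.
Proof.
elim/ltn_ind: x => x IH.
case: x IH => [|[|[|x]]] IH.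
- rewrite big_mkcond big_nat_recr //= big_geq //.
- rewrite big_mkcond big_nat_recr //= big_nat_recr //= big_geq //.
- rewrite big_mkcond big_nat_recr //= big_nat_recr //= big_nat_recr //= big_geq //.
case/boolP: (odd x) => ox.
- rewrite big_mkcond big_nat_recr //= -big_mkcond /=.
  have np : prime x.+3 = false.
    apply/negP => pr; have := even_prime pr; case => [|]; first by [].
    by rewrite /= ox.
  rewrite np muln1; apply: leq_trans (IH x.+2 _) _ => //.
  rewrite leq_pexp2l //.
- have [m em] : exists m, x.+3 = m.*2.+1.
    exists (x.+2)./2; have := odd_double_half x.+2.
    rewrite /= negbK (negbTE ox) add0n => ->; by [].
  have m1 : 1 <= m by lia.
  rewrite em (big_cat_nat _ (n:=m.+2)) //=; last by lia.
  apply: (@leq_trans (4 ^ m.+1 * 4 ^ m)); last first.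
    rewrite -expnD; apply: leq_pexp2l => //; lia.
  apply: leq_mul.
    by apply: IH; lia.
  apply: leq_trans (bin_mid_le m).
  apply: dvdn_leq; first by rewrite bin_gt0; lia.
  exact: primes_dvd_bin.
Qed.


Lemma primorial_ord M : \prod_(q < M | prime q) q <= 4 ^ M.
Proof.
rewrite -(big_mkord prime (fun q => q)).
case: M => [|M]; first by rewrite big_geq.
apply: leq_trans (primorial M) _; rewrite leq_pexp2l //.
Qed.

Lemma cheb_nat (M s : nat) : s ^ (#|[pred q : 'I_M | prime q]| - s.+1) <= 4 ^ M.
Proof.
case: s => [|s].
  case: (_ - _) => [|e]; first by rewrite expn0 expn_gt0.
  by rewrite exp0n.
set A := [pred q : 'I_M | prime q].
pose A1 := [pred q : 'I_M | prime q && (s.+1 < q)].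
pose A2 := [pred q : 'I_M | q <= s.+1].
have cA : #|A| <= #|A1| + s.+2.
  rewrite -(cardID (fun q : 'I_M => s.+1 < q) A).
  apply: leq_add.
    apply: subset_leq_card; apply/subsetP => q; by rewrite !inE.
  apply: (@leq_trans #|A2|).
    apply: subset_leq_card; apply/subsetP => q; rewrite !inE -leqNgt; by case/andP.
  pose sq := [seq val q | q <- enum A2].
  have us : uniq sq by rewrite map_inj_uniq ?enum_uniq //; exact: val_inj.
  have sub : {subset sq <= iota 0 s.+2}.
    move=> v /mapP [q]; rewrite mem_enum inE => hq ->.
    by rewrite mem_iota add0n ltnS.
  by have := uniq_leq_size us sub; rewrite size_map size_iota -cardE.
apply: (@leq_trans (s.+1 ^ #|A1|)).
  rewrite leq_pexp2l //; lia.
apply: (@leq_trans (\prod_(q in A1) q)).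
  rewrite -prod_nat_const; apply: leq_prod => q; rewrite inE => /andP [_ h].
  exact: ltnW.
apply: leq_trans (primorial_ord M).
rewrite (bigID (fun q : 'I_M => s.+1 < q) (fun q : 'I_M => prime q)) /=.
have -> : \prod_(q in A1) q = \prod_(i < M | prime i && (s.+1 < i)) i.
  by apply: eq_bigl => q; rewrite inE.
apply: leq_pmulr; elim/big_ind: _ => [//|x y hx hy|i /andP [pi _]].
  by rewrite muln_gt0 hx hy.
exact: prime_gt0.
Qed.


Lemma n_sq (B : seq nat) (a d N : nat) : uniq B -> 0 < d ->
  (forall k, k < N -> exists b b', b \in B /\ b' \in B /\ a + k * d = b * b') ->
  N <= size B ^ 2.
Proof.
move=> uB d0 H.
pose s := [seq a + k * d | k <- iota 0 N].
have us : uniq s.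
  rewrite map_inj_uniq ?iota_uniq // => k k' e.
  by apply/eqP; rewrite -(eqn_pmul2r d0) -(eqn_add2l a) e.
have sub : {subset s <= [seq b * b' | b <- B, b' <- B]}.
  move=> v /mapP [k]; rewrite mem_iota add0n => /andP [_ kN] ->.
  have [b [b' [hb [hb' e]]]] := H k kN.
  by rewrite e; apply/allpairsP; exists (b, b').
have := uniq_leq_size us sub.
by rewrite size_map size_iota size_allpairs expnS expn1.
Qed.

Lemma coprime_gcd_div a d : 0 < d -> coprime (a %/ gcdn a d) (d %/ gcdn a d).
Proof.
move=> d0; set g := gcdn a d.
have g0 : 0 < g by rewrite gcdn_gt0 d0 orbT.
rewrite /coprime; apply/eqP.
have e : gcdn (a %/ g) (d %/ g) * g = g.
  by rewrite muln_gcdl !divnK ?dvdn_gcdl ?dvdn_gcdr.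
by apply/eqP; rewrite -(eqn_pmul2r g0) e mul1n.
Qed.

Lemma expn_monol m n e : m <= n -> m ^ e <= n ^ e.
Proof. move=> h; elim: e => [|e IH]; rewrite ?expn0 // !expnS; exact: leq_mul. Qed.

Lemma priv_sep (q al de c l l' M : nat) : coprime al de -> prime q -> M <= q ->
  l < l' -> l' < M -> q %| al + (c + l) * de -> q %| al + (c + l') * de -> False.
Proof.
move=> cop pq Mq ll' l'M h1 h2.
have : q %| (al + (c + l') * de) - (al + (c + l) * de) by apply: dvdn_sub.
have -> : (al + (c + l') * de) - (al + (c + l) * de) = (l' - l) * de.
  by rewrite subnDl -mulnBl subnDl.
rewrite Euclid_dvdM // => /orP [] hq.
  have h0 : 0 < l' - l by rewrite subn_gt0.
  have := dvdn_leq h0 hq; lia.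
have qa : q %| al by move: h1; rewrite dvdn_addl // dvdn_mull.
move: cop; rewrite /coprime => /eqP cop.
have : q %| gcdn al de by rewrite dvdn_gcd qa hq.
by rewrite cop dvdn1 => /eqP q1; move: pq; rewrite q1.
Qed.

Lemma comb_main (B : seq nat) (a d N M : nat) :
  uniq B -> (forall b, b \in B -> 0 < b) -> 0 < d -> 0 < a -> 2 <= M -> M.*2 <= N ->
  (forall k, k < N -> exists b b', b \in B /\ b' \in B /\ a + k * d = b * b') ->
  exists k y0, k <= (size B).+1 /\ N - M <= y0 /\
     y0 ^ (M - k) <= M`! * (y0.*2) ^ #|[pred q : 'I_M | prime q]|.
Proof.
move=> uB Bpos d0 a0 M2 MN H.
set g := gcdn a d.
have g0 : 0 < g by rewrite gcdn_gt0 d0 orbT.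
set al := a %/ g; set de := d %/ g.
have ea : a = al * g by rewrite divnK // dvdn_gcdl.
have ed : d = de * g by rewrite divnK // dvdn_gcdr.
have cop : coprime al de := coprime_gcd_div a d0.
have al0 : 0 < al by move: a0; rewrite ea muln_gt0 => /andP [].
have de0 : 0 < de by move: d0; rewrite ed muln_gt0 => /andP [].
set c := N - M.
pose y (l : 'I_M) := al + (c + l) * de.
have ypos : forall l, 0 < y l by move=> l; rewrite /y; lia.
pose P := [pred l : 'I_M | (1 < y l) && (M <= max_pdiv (y l))].
have hk : #|P| <= (size B).+1.
  apply: (@priv_bound B M g y P (fun l => max_pdiv (y l)) g0 ypos) => //.
  - move=> l.
    have lN : c + l < N by rewrite /c; have := ltn_ord l; lia.
    have [b [b' [hb [hb' e]]]] := H _ lN.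
    have ib : index b B < size B by rewrite index_mem.
    have ib' : index b' B < size B by rewrite index_mem.
    exists (Ordinal ib, Ordinal ib') => /=.
    rewrite !nth_index // -e /y ea ed; apply/eqP; nia.
  - move=> l /andP [y1 Mq].
    have pq := max_pdiv_prime y1.
    split => //; split; first exact: max_pdiv_dvd.
    move=> l' ne; apply/negP => hd.
    case: (ltngtP l l') => hll.
    + exact: (priv_sep cop pq Mq hll (ltn_ord l') (max_pdiv_dvd _) hd).
    + exact: (priv_sep cop pq Mq hll (ltn_ord l) hd (max_pdiv_dvd _)).
    + by move: ne; rewrite (val_inj hll) eqxx.
set Y := al + N * de.
have hY : forall l, 0 < y l <= Y.
  move=> l; rewrite ypos /= /y /Y; have := ltn_ord l; rewrite /c => hl.
  apply: leq_add => //; apply: leq_mul => //; lia.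
have Y0 : 0 < Y by rewrite /Y; lia.
have HS : forall l, (predC P) l -> max_pdiv (y l) < M.
  move=> l; rewrite /= negb_and -!ltnNge => /orP [] h //.
  have -> : y l = 1 by have := ypos l; lia.
  by rewrite /max_pdiv /= (leq_trans _ M2).
have hsm := @smooth_prod M Y al c de y (predC P) Y0 cop (fun l => erefl) hY HS.
exists #|P|, (al + c * de); split => //; split.
  by rewrite /c; nia.
set y0 := al + c * de.
have hlow : y0 ^ (M - #|P|) <= \prod_(l | predC P l) y l.
  have -> : M - #|P| = #|predC P|.
    rewrite -{1}(card_ord M) -(cardC P) addKn; apply: eq_card => l; by rewrite !inE.
  rewrite -prod_nat_const; apply: leq_prod => l _; rewrite /y0 /y.
  by rewrite leq_add2l leq_mul2r leq_addr orbT.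
apply: (leq_trans hlow); apply: (leq_trans hsm).
rewrite leq_mul2l; apply/orP; right; apply: expn_monol.
by rewrite /Y /y0 /c; nia.
Qed.


Lemma In_mem (s : seq nat) x : List.In x s <-> x \in s.
Proof.
elim: s => [|y s IH] //=; rewrite in_cons; split.
- by case => [->|/IH ->]; rewrite ?eqxx ?orbT.
- by case/orP => [/eqP ->|/IH h]; [left | right].
Qed.

Lemma NoDup_uniq (s : seq nat) : List.NoDup s -> uniq s.
Proof.
elim: s => [|y s IH] //= h; inversion h; subst.
by rewrite IH // andbT; apply/negP => /In_mem.
Qed.

Lemma expn_pow m e : expn m e = Nat.pow m e.
Proof. by elim: e => [|e IH] //; rewrite expnS IH. Qed.

Lemma fact_le_pow M : M`! <= M ^ M.
Proof.
elim: M => [|M IH] //; rewrite factS expnS leq_mul2l; apply/orP; right.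
apply: leq_trans IH _; exact: expn_monol.
Qed.

Lemma main_nat (B : list nat) (a d N M : nat) :
  List.NoDup B -> (forall b, List.In b B -> 1 <= b) -> 0 < d -> 0 < a -> 2 <= M -> 2 * M <= N ->
  (forall k, k < N -> exists b b', List.In b B /\ List.In b' B /\ a + k * d = b * b') ->
  (N <= length B * length B) /\
  exists k y0 pi, k <= S (length B) /\ N - M <= y0 /\
      Nat.pow y0 (M - k) <= Nat.pow M M * Nat.pow (2 * y0) pi /\
      forall s, Nat.pow s (pi - S s) <= Nat.pow 4 M.
Proof.
move=> nd Bp d0 a0 M2 MN H.
have uB := NoDup_uniq nd.
have Bp' : forall b, b \in B -> 0 < b by move=> b /In_mem /Bp.
have H' : forall k, k < N -> exists b b', b \in B /\ b' \in B /\ a + k * d = b * b'.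
  move=> k kN; have [b [b' [h1 [h2 h3]]]] := H k kN.
  by exists b, b'; rewrite -!In_mem.
split.
  have := n_sq uB d0 H'; by rewrite expnS expn1.
have MN' : M.*2 <= N by rewrite -mul2n.
have [k [y0 [hk [hy hp]]]] := comb_main uB Bp' d0 a0 M2 MN' H'.
exists k, y0, #|[pred q : 'I_M | prime q]|; split => //; split => //; split.
  rewrite -!expn_pow; apply: leq_trans hp _; apply: leq_mul; first exact: fact_le_pow.
  by rewrite -mul2n.
by move=> s; rewrite -!expn_pow; apply: cheb_nat.
Qed.

Lemma main_nat' (B : list nat) (a d N M : nat) :
  List.NoDup B -> (forall b, List.In b B -> (1 <= b)%coq_nat) -> (0 < d)%coq_nat ->
  (0 < a)%coq_nat -> (2 <= M)%coq_nat -> (2 * M <= N)%coq_nat ->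
  (forall k, (k < N)%coq_nat -> exists b b', List.In b B /\ List.In b' B /\ a + k * d = b * b') ->
  (N <= length B * length B)%coq_nat /\
  exists k y0 pi, (k <= S (length B))%coq_nat /\ (N - M <= y0)%coq_nat /\
      (Nat.pow y0 (M - k) <= Nat.pow M M * Nat.pow (2 * y0) pi)%coq_nat /\
      forall s, (Nat.pow s (pi - S s) <= Nat.pow 4 M)%coq_nat.
Proof.
move=> nd Bp /ltP d0 /ltP a0 /leP M2 /leP MN H.
have Bp' : forall b, List.In b B -> 1 <= b by move=> b /Bp /leP.
have H' : forall k, k < N -> exists b b', List.In b B /\ List.In b' B /\ a + k * d = b * b'.
  by move=> k /ltP /H.
have [h1 [k [y0 [pi [h2 [h3 [h4 h5]]]]]]] := main_nat nd Bp' d0 a0 M2 MN H'.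
split; first exact/leP.
exists k, y0, pi; split; first exact/leP.
split; first exact/leP.
split; first exact/leP.
move=> s; exact/leP.
Qed.

End NT.

From Stdlib Require Import Lra Lia Psatz.


Lemma ln_le' x y : 0 < x -> x <= y -> ln x <= ln y.
Proof.
intros hx hxy; destruct (Rle_lt_or_eq_dec _ _ hxy) as [h|h].
- left; apply ln_increasing; auto.
- subst; lra.
Qed.

Lemma ln2_lt1 : ln 2 < 1.
Proof.
rewrite <- (ln_exp 1). apply ln_increasing; [lra|].
pose proof (exp_ineq1 1). lra.
Qed.

Lemma ln_lt_id x : 0 < x -> ln x < x.
Proof.
intro hx; pose proof (exp_ineq1_le (ln x)); rewrite exp_ln in H; lra.
Qed.

Lemma INR_pos n : (0 < n)%nat -> 0 < INR n.
Proof. intro; apply lt_0_INR; auto. Qed.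

Lemma ln_INR_pow x e : (0 < x)%nat -> ln (INR (x ^ e)) = INR e * ln (INR x).
Proof. intro; rewrite pow_INR, ln_pow; auto; apply INR_pos; auto. Qed.

Lemma ln_INR_le a b : (0 < a)%nat -> (a <= b)%nat -> ln (INR a) <= ln (INR b).
Proof. intros; apply ln_le'; [apply INR_pos; auto | apply le_INR; auto]. Qed.

Lemma final_real (n N M k pi s y0 L : nat) :
  (2 <= n)%nat -> (N <= n*n)%nat -> (k <= S n)%nat ->
  (N - M <= y0)%nat -> (y0^(M-k) <= M^M * (2*y0)^pi)%nat ->
  (s^(pi - S s) <= 4^M)%nat -> (s*s <= M)%nat -> (M < S s * S s)%nat ->
  (L * M <= N)%nat -> (N < L * S M)%nat -> (2^141 <= L)%nat -> (2^141 <= M)%nat ->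
  INR N <= 4 * INR L * INR n * ln (INR n).
Proof.
intros Hn HN Hk Hy0 H4 H5 H6 H7 H8 H9 HL HM.
pose proof ln_lt_2 as l2lo. pose proof ln2_lt1 as l2hi.
set (l2 := ln 2) in *.
assert (P2 : forall e, (0 < 2 ^ e)%nat) by (intro e; pose proof (Nat.pow_nonzero 2 e); lia).
assert (M0 : (0 < M)%nat) by (pose proof (P2 141%nat); lia).
assert (Lg : (2^140 * M <= y0)%nat).
{ assert (2 ^ 141 = 2 * 2^140)%nat as E by (rewrite Nat.pow_succ_r'; lia).
  set (X := (2^140)%nat) in *. pose proof (P2 140%nat) as hX; fold X in hX.
  assert (L * M >= 2 * X * M)%nat by (apply Nat.mul_le_mono_r; lia).
  assert (X * M >= M)%nat by nia. lia. }
assert (y00 : (0 < y0)%nat) by (pose proof (P2 140%nat); nia).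
set (m := ln (INR M)). set (u := ln (INR y0)).
assert (hm : 70 <= m).
{ unfold m. pose proof (ln_INR_le _ _ (P2 141%nat) HM) as h. rewrite ln_INR_pow in h by lia.
  rewrite (INR_IZR_INZ 141%nat), (INR_IZR_INZ 2%nat) in h. simpl in h. fold l2 in h. lra. }
assert (Mpos : 0 < INR M) by (apply INR_pos; auto).
assert (hu : 70 + m <= u).
{ assert (Lg0 : (0 < 2^140 * M)%nat) by (apply Nat.mul_pos_pos; auto).
  unfold u, m. pose proof (ln_INR_le _ _ Lg0 Lg) as h.
  rewrite mult_INR, ln_mult, ln_INR_pow in h by (try apply INR_pos; auto; lia).
  rewrite (INR_IZR_INZ 140%nat), (INR_IZR_INZ 2%nat) in h. simpl in h. fold l2 in h. lra. }
assert (R1 : (M <= k)%nat \/ (INR M - INR k) * u <= INR M * m + INR pi * (l2 + u)).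
{ destruct (Compare_dec.le_lt_dec M k) as [h|h]; [left; auto|right].
  assert (p0 : (0 < y0 ^ (M - k))%nat) by (pose proof (Nat.pow_nonzero y0 (M-k)); lia).
  pose proof (ln_INR_le _ _ p0 H4) as h2.
  rewrite ln_INR_pow in h2 by auto.
  rewrite minus_INR in h2 by lia.
  rewrite mult_INR, ln_mult in h2.
  2: { rewrite pow_INR; apply pow_lt, INR_pos; auto. }
  2: { rewrite pow_INR; apply pow_lt, INR_pos; lia. }
  rewrite !pow_INR, !ln_pow in h2 by (apply INR_pos; lia).
  rewrite mult_INR, ln_mult in h2 by (try apply INR_pos; lia).
  replace (INR 2) with 2 in h2 by (simpl; lra). fold l2 m u in h2. lra. }
assert (s1 : (1 <= s)%nat) by (destruct s; [simpl in H7; lia | lia]).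
set (sr := INR s) in *.
assert (sr1 : 1 <= sr) by (unfold sr; apply (le_INR 1); auto).
set (ls := ln sr). set (ls1 := ln (INR (S s))).
assert (S_s : INR (S s) = sr + 1) by (unfold sr; rewrite S_INR; lra).
assert (hm2 : m < 2 * ls1).
{ unfold m, ls1.
  assert (e : ln (INR (S s ^ 2)) = 2 * ln (INR (S s))) by (rewrite ln_INR_pow; [simpl; lra | lia]).
  rewrite <- e. apply ln_increasing; [auto|]. apply lt_INR. simpl. lia. }
assert (hls1 : ls1 <= l2 + ls).
{ unfold ls1, ls, l2. rewrite <- ln_mult by lra. apply ln_le'; lra. }
assert (hls1b : ls1 < sr + 1) by (unfold ls1; rewrite <- S_s; apply ln_lt_id; lra).
assert (ss : sr * sr <= INR M) by (unfold sr; rewrite <- mult_INR; apply le_INR; auto).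
assert (hsm : (sr + 1) * m <= 8 * INR M).
{ assert ((sr + 1) * m <= (sr+1) * (2 * ls1)) by (apply Rmult_le_compat_l; lra).
  assert ((sr+1) * (2 * ls1) <= (sr + 1) * (2 * (sr + 1))) by (apply Rmult_le_compat_l; lra).
  nra. }
assert (hls : m / 4 <= ls) by lra.
assert (R3 : INR pi * m <= 16 * INR M).
{ destruct (Compare_dec.le_lt_dec pi (S s)) as [h|h].
  - apply le_INR in h. rewrite S_s in h. nra.
  - assert (p0 : (0 < s ^ (pi - S s))%nat) by (pose proof (Nat.pow_nonzero s (pi - S s)); lia).
    pose proof (ln_INR_le _ _ p0 H5) as h2.
    rewrite !ln_INR_pow in h2 by lia. rewrite minus_INR in h2 by lia.
    replace (INR 4) with (2 * 2) in h2 by (simpl; lra).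
    rewrite ln_mult in h2 by lra. fold l2 ls m in h2. rewrite S_s in h2.
    assert (0 <= ls) by lra.
    assert ((INR pi - (sr + 1)) * m <= 4 * ((INR pi - (sr + 1)) * ls)).
    { assert (0 <= INR pi - (sr + 1)) by (apply lt_INR in h; rewrite S_s in h; lra). nra. }
    assert (l2 * INR M <= INR M) by nra.
    assert (INR M * (l2 + l2) <= 2 * INR M) by nra.
    change (ln (INR s)) with ls in h2. nra. }
assert (R4 : 3 * INR M <= INR k * m).
{ destruct R1 as [h|h].
  - apply le_INR in h. nra.
  - assert (up : 0 < u) by lra.
    assert (A1 : INR k * u >= INR M * (u - m) - 2 * INR pi * u).
    { assert (INR pi * l2 <= INR pi * u) by (apply Rmult_le_compat_l; [apply pos_INR | lra]). nra. }
    assert (A2 : INR k * u * m >= INR M * (u - m) * m - 2 * (INR pi * m) * u).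
    { assert (0 <= m) by lra. nra. }
    assert (A3 : INR k * u * m >= INR M * ((u - m) * m - 32 * u)) by nra.
    assert (A4 : (u - m) * m - 32 * u >= 3 * u) by nra.
    assert (A5 : INR k * u * m >= INR M * (3 * u)).
    { assert (INR M * ((u - m) * m - 32 * u) >= INR M * (3 * u)) by (apply Rmult_ge_compat_l; lra). lra. }
    assert (A6 : (INR k * m) * u >= (3 * INR M) * u) by lra.
    apply Rmult_le_reg_r with u; lra. }
assert (nr2 : 2 <= INR n) by (apply (le_INR 2); auto).
assert (hk : INR k <= INR n + 1) by (rewrite <- S_INR; apply le_INR; auto).
assert (hmN : m <= 2 * ln (INR n)).
{ unfold m.
  assert (e : ln (INR (n ^ 2)) = 2 * ln (INR n)) by (rewrite ln_INR_pow; [simpl; lra | lia]).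
  rewrite <- e. apply ln_INR_le; [lia|]. simpl. nia. }
assert (hln : 0 < ln (INR n)) by (rewrite <- ln_1; apply ln_increasing; lra).
assert (M1 : INR M <= INR n * ln (INR n)).
{ assert (INR k * m <= (INR n + 1) * m) by (apply Rmult_le_compat_r; lra).
  assert ((INR n + 1) * m <= (INR n + 1) * (2 * ln (INR n))) by (apply Rmult_le_compat_l; lra).
  nra. }
assert (NL : INR N <= 2 * INR L * INR M).
{ assert (L * S M <= 2 * L * M)%nat by nia.
  assert (INR N <= INR (2 * L * M)) by (apply le_INR; lia).
  rewrite !mult_INR in H0. simpl in H0. lra. }
assert (Lp : 0 <= INR L) by apply pos_INR.
assert (2 * INR L * INR M <= 2 * INR L * (INR n * ln (INR n))) by (apply Rmult_le_compat_l; lra).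
nra.
Qed.

Lemma big_case (L : nat) : (2^141 <= L)%nat ->
  forall (B : list nat) (n N a d : nat), NoDup B -> length B = n -> (2 <= n)%nat ->
  (forall b, In b B -> (1 <= b)%nat) -> (0 < d)%nat -> (L * 2^141 <= N)%nat ->
  (forall k, (k < N)%nat -> exists b b', In b B /\ In b' B /\ (a + k*d = b*b')%nat) ->
  INR N <= 4 * INR L * INR n * ln (INR n).
Proof.
intros HL B n N a d nd hn n2 Bp d0 HN H.
assert (P2 : forall e, (0 < 2 ^ e)%nat) by (intro e; pose proof (Nat.pow_nonzero 2 e); lia).
assert (L0 : (0 < L)%nat) by (pose proof (P2 141%nat); lia).
assert (N0 : (0 < N)%nat) by (pose proof (P2 141%nat); nia).
assert (a0 : (0 < a)%nat).
{ destruct (H 0%nat N0) as [b [b' [h1 [h2 h3]]]].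
  pose proof (Bp _ h1). pose proof (Bp _ h2). nia. }
set (M := (N / L)%nat).
assert (hdm := Nat.div_mod N L ltac:(lia)).
assert (hmod := Nat.mod_upper_bound N L ltac:(lia)).
fold M in hdm.
assert (H8 : (L * M <= N)%nat) by lia.
assert (H9 : (N < L * S M)%nat) by lia.
assert (HM : (2^141 <= M)%nat).
{ unfold M. rewrite <- (Nat.div_mul (2^141) L) by lia. apply Nat.div_le_mono; lia. }
assert (M2 : (2 <= M)%nat).
{ pose proof (Nat.pow_le_mono_r 2 1 141 ltac:(lia) ltac:(lia)) as h0. rewrite Nat.pow_1_r in h0. lia. }
assert (L2 : (2 <= L)%nat).
{ pose proof (Nat.pow_le_mono_r 2 1 141 ltac:(lia) ltac:(lia)) as h0. rewrite Nat.pow_1_r in h0. lia. }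
assert (MN : (2 * M <= N)%nat) by nia.
destruct (@NT.main_nat' B a d N M nd Bp d0 a0 M2 MN H) as [HNn [k [y0 [pi [hk [hy [hp hc]]]]]]].
rewrite hn in HNn, hk.
pose (s := Nat.sqrt M).
destruct (Nat.sqrt_spec M ltac:(lia)) as [hs1 hs2]. fold s in hs1, hs2.
apply (final_real n N M k pi s y0 L); auto.
Qed.

Lemma z_to_nat (B : list nat) (N : nat) (a d : Z) : d <> 0%Z -> (0 < N)%nat ->
  (forall k : nat, (k < N)%nat -> in_prodset B (a + Z.of_nat k * d)%Z) ->
  exists a' d' : nat, (0 < d')%nat /\
   forall k, (k < N)%nat -> exists b b', In b B /\ In b' B /\ (a' + k*d' = b*b')%nat.
Proof.
intros dn N0 H.
destruct (Z.lt_total d 0) as [dneg|[deq|dpos]]; [| lia |].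
- exists (Z.to_nat (a + Z.of_nat (N - 1) * d)), (Z.to_nat (- d)). split; [lia|].
  intros k hk. destruct (H (N - 1 - k)%nat ltac:(lia)) as [b [b' [h1 [h2 h3]]]].
  exists b, b'; split; [auto|split; [auto|]].
  destruct (H (N - 1)%nat ltac:(lia)) as [c [c' [_ [_ h4]]]].
  assert (h5 : (0 <= a + Z.of_nat (N - 1) * d)%Z) by lia.
  apply Nat2Z.inj. rewrite <- h3. rewrite Nat2Z.inj_add, Nat2Z.inj_mul, !Z2Nat.id by lia.
  rewrite !Nat2Z.inj_sub by lia. simpl. ring.
- exists (Z.to_nat a), (Z.to_nat d). split; [lia|].
  intros k hk. destruct (H k hk) as [b [b' [h1 [h2 h3]]]].
  exists b, b'; split; [auto|split; [auto|]].
  destruct (H 0%nat N0) as [c [c' [_ [_ h4]]]].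
  assert (h5 : (0 <= a)%Z) by lia.
  apply Nat2Z.inj. rewrite <- h3. rewrite Nat2Z.inj_add, Nat2Z.inj_mul, !Z2Nat.id by lia. ring.
Qed.

Theorem theorem1 :
  exists C : R, C > 0 /\
  forall (B : list nat) (n N : nat) (a d : Z),
    NoDup B -> length B = n -> (2 <= n)%nat ->
    (forall b, In b B -> (1 <= b)%nat) ->
    d <> 0%Z ->
    (forall k : nat, (k < N)%nat -> in_prodset B (a + Z.of_nat k * d)%Z) ->
    INR N <= C * INR n * ln (INR n).
Proof.
set (L := (2 ^ 141)%nat).
assert (HL : (2^141 <= L)%nat) by (unfold L; lia).
assert (L0 : 0 < INR L) by (apply lt_0_INR; unfold L; pose proof (Nat.pow_nonzero 2 141); lia).
assert (B0 : 0 <= INR (L * 2^141)) by apply pos_INR.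
exists (4 * INR L + INR (L * 2^141)). split; [lra|].
intros B n N a d nd hn n2 Bp dn H.
assert (nr : 2 <= INR n) by (apply (le_INR 2); auto).
assert (l2 := ln_lt_2).
assert (hln : ln 2 <= ln (INR n)) by (apply ln_le'; lra).
assert (nl : 1 <= INR n * ln (INR n)) by nra.
destruct (Compare_dec.le_lt_dec (L * 2^141) N) as [big|small].
- assert (N0 : (0 < N)%nat) by (pose proof (Nat.pow_nonzero 2 141); unfold L in big; nia).
  destruct (z_to_nat B N a d dn N0 H) as [a' [d' [d0 H']]].
  pose proof (big_case L HL B n N a' d' nd hn n2 Bp d0 big H') as h.
  nra.
- assert (INR N <= INR (L * 2^141)) by (apply le_INR; lia).
  nra.
Qed.
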